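(* Let $E,F$ be Lebesgue-measurable subsets of $[-\infty,\infty]$, and let $m:F\to E$ be a surjective, measure-preserving, order-preserving (nondecreasing) map. Then there is a Lebesgue-null set $F_0\subseteq F$ such that $m$ restricted to $F\setminus F_0$ is a bijection onto $E$.
   Context: Lebesgue measure $\lambda$ on $[-\infty,\infty]$ gives $\{\pm\infty\}$ measure zero. A map $m:F\to E$ is measure-preserving if for every measurable $A\subseteq E$, $m^{-1}(A)$ is measurable with $\lambda(m^{-1}(A))=\lambda(A)$. *)

(* Defs.v *)
From Stdlib Require Import Reals Classical ClassicalEpsilon.
Open Scope R_scope.

Inductive xR : Type := Fin (x : R) | PInf | MInf.

Definition xle (a b : xR) : Prop :=
  match a, b with
  | MInf, _ => True
  | _, PInf => True
  | Fin x, Fin y => x <= y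
  | _, _ => False
  end.

(* addition, used only on values in [0, +oo] *)
Definition xplus (a b : xR) : xR :=
  match a, b with
  | PInf, _ | _, PInf => PInf
  | MInf, _ | _, MInf => MInf
  | Fin x, Fin y => Fin (x + y)
  end.

Definition series_val (u : nat -> R) (v : xR) : Prop :=
  match v with
  | Fin l => Un_cv (fun n => sum_f_R0 u n) l
  | PInf => cv_infty (fun n => sum_f_R0 u n)
  | MInf => False
  end.

Definition cover_costs (A : R -> Prop) (c : xR) : Prop :=
  exists a b : nat -> R,
    (forall n, a n <= b n) /\
    (forall x, A x -> exists n, a n < x < b n) /\
    series_val (fun n => b n - a n) c.

Definition is_glb (S : xR -> Prop) (v : xR) : Prop :=
  (forall c, S c -> xle v c) /\
  (forall w, (forall c, S c -> xle w c) -> xle w v).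

Definition lam_outer (A : R -> Prop) : xR :=
  epsilon (inhabits PInf) (fun v => is_glb (cover_costs A) v).

Definition leb_measurable (A : R -> Prop) : Prop :=
  forall T : R -> Prop,
    lam_outer T = xplus (lam_outer (fun x => T x /\ A x))
                        (lam_outer (fun x => T x /\ ~ A x)).

(* Subsets of [-oo,+oo]: only the finite part matters;
   {+oo}, {-oo} are null (hence measurable). *)
Definition fin_part (A : xR -> Prop) : R -> Prop := fun x => A (Fin x).

Definition xmeasurable (A : xR -> Prop) : Prop := leb_measurable (fin_part A).

Definition lam (A : xR -> Prop) : xR := lam_outer (fin_part A).

Definition measure_preserving (F E : xR -> Prop) (m : xR -> xR) : Prop :=
  forall A : xR -> Prop,
    (forall y, A y -> E y) -> xmeasurable A ->
    xmeasurable (fun x => F x /\ A (m x)) /\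
    lam (fun x => F x /\ A (m x)) = lam A.

(* Main.v *)
Require Import Defs.
From Stdlib Require Import Reals Classical ClassicalEpsilon Cantor Lia Lra ZArith.
Open Scope R_scope.

Lemma xle_refl a : xle a a.
Proof. destruct a; simpl; auto; lra. Qed.
Lemma xle_trans a b c : xle a b -> xle b c -> xle a c.
Proof. destruct a, b, c; simpl; auto; try tauto; lra. Qed.
Lemma xle_antisym a b : xle a b -> xle b a -> a = b.
Proof. destruct a, b; simpl; try tauto; intros; f_equal; lra. Qed.
Lemma xle_total a b : xle a b \/ xle b a.
Proof. destruct a, b; simpl; auto; lra. Qed.

Lemma sum_nonneg u N : (forall n, 0 <= u n) -> 0 <= sum_f_R0 u N.
Proof. intros Hu. induction N; simpl; [apply Hu|]. specialize (Hu (S N)). lra. Qed.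

Lemma series_nonneg u v : (forall n, 0 <= u n) -> series_val u v -> xle (Fin 0) v.
Proof.
  intros Hu. destruct v; simpl; auto.
  intros Hc. destruct (Rle_or_lt 0 x) as [h|h]; auto.
  destruct (Hc (-x)) as [N HN]; [lra|].
  specialize (HN N (le_n _)). unfold Rdist in HN.
  assert (0 <= sum_f_R0 u N) by (apply sum_nonneg; auto).
  apply Rabs_def2 in HN. destruct HN. lra.
Qed.

Lemma cost_nonneg A c : cover_costs A c -> xle (Fin 0) c.
Proof.
  intros (a & b & Hab & _ & Hs). eapply series_nonneg; [|exact Hs]. intro n. cbv beta. specialize (Hab n). lra.
Qed.

Lemma glb_exists (S : xR -> Prop) : (forall c, S c -> xle (Fin 0) c) -> exists v, is_glb S v.
Proof.
  intros Hpos.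
  destruct (classic (exists l, S (Fin l))) as [[l Hl]|Hn].
  - destruct (completeness (fun x => S (Fin (-x)))) as [g [Hg1 Hg2]].
    + exists 0. intros x Hx. specialize (Hpos _ Hx). simpl in Hpos. lra.
    + exists (-l). rewrite Ropp_involutive. exact Hl.
    + exists (Fin (-g)). split.
      * intros c Hc. destruct c; simpl; auto.
        -- assert (-x <= g) by (apply Hg1; rewrite Ropp_involutive; auto). lra.
        -- apply Hpos in Hc. simpl in Hc. tauto.
      * intros w Hw. destruct w; simpl; auto.
        -- assert (g <= -x); [|lra]. apply Hg2. intros y Hy. specialize (Hw _ Hy). simpl in Hw. lra.
        -- specialize (Hw _ Hl). simpl in Hw. tauto.
  - exists PInf. split.
    + intros c Hc. destruct c; simpl; auto.
      * exfalso. apply Hn. eauto.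
      * apply Hpos in Hc. simpl in Hc. tauto.
    + intros w _. destruct w; simpl; auto.
Qed.

Lemma lam_outer_glb A : is_glb (cover_costs A) (lam_outer A).
Proof.
  unfold lam_outer. apply epsilon_spec. apply glb_exists. apply cost_nonneg.
Qed.

Lemma lam_outer_nonneg A : xle (Fin 0) (lam_outer A).
Proof. apply (proj2 (lam_outer_glb A)). apply cost_nonneg. Qed.

Lemma lam_outer_mono (A B : R -> Prop) : (forall x, A x -> B x) -> xle (lam_outer A) (lam_outer B).
Proof.
  intros H. apply (proj2 (lam_outer_glb B)). intros c (a & b & H1 & H2 & H3).
  apply (proj1 (lam_outer_glb A)). exists a, b. repeat split; auto.
Qed.

Lemma lam_outer_small A : (forall eps, 0 < eps -> exists l, l <= eps /\ cover_costs A (Fin l)) ->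
  lam_outer A = Fin 0.
Proof.
  intros H. pose proof (lam_outer_nonneg A) as Hn.
  destruct (lam_outer A) eqn:E; simpl in Hn; try tauto.
  - f_equal. destruct (Rle_or_lt x 0) as [h|h]; [lra|].
    destruct (H (x/2)) as [l [Hl Hc]]; [lra|].
    pose proof (proj1 (lam_outer_glb A) _ Hc). rewrite E in H0. simpl in H0. lra.
  - destruct (H 1) as [l [Hl Hc]]; [lra|].
    pose proof (proj1 (lam_outer_glb A) _ Hc). rewrite E in H0. simpl in H0. tauto.
Qed.

Definition ilv (d1 d2 : nat -> R) (n : nat) : R :=
  if Nat.even n then d1 (Nat.div2 n) else d2 (Nat.div2 n).

Lemma ilv_even d1 d2 n : ilv d1 d2 (2*n) = d1 n.
Proof. unfold ilv. rewrite Nat.even_even, Nat.div2_double. auto. Qed.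
Lemma ilv_odd d1 d2 n : ilv d1 d2 (S (2*n)) = d2 n.
Proof. unfold ilv. rewrite Nat.even_succ, <- Nat.negb_even, Nat.even_even, Nat.div2_succ_double. auto. Qed.

Lemma ilv_sum d1 d2 n :
  sum_f_R0 (ilv d1 d2) (S (2*n)) = sum_f_R0 d1 n + sum_f_R0 d2 n /\
  sum_f_R0 (ilv d1 d2) (2*(S n)) = sum_f_R0 d1 (S n) + sum_f_R0 d2 n.
Proof.
  induction n.
  - simpl. pose proof (ilv_even d1 d2 0). pose proof (ilv_odd d1 d2 0). pose proof (ilv_even d1 d2 1).
    simpl in *. split; lra.
  - destruct IHn as [IH1 IH2].
    assert (E1 : S (2 * S n) = S (2 * S n)) by reflexivity.
    split.
    + change (sum_f_R0 (ilv d1 d2) (S (2 * S n)) = sum_f_R0 d1 (S n) + sum_f_R0 d2 (S n)).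
      rewrite tech5, IH2, ilv_odd, (tech5 d2 n). lra.
    + replace (2 * S (S n))%nat with (S (S (2 * S n))) by lia.
      rewrite tech5, tech5, IH2, ilv_odd.
      replace (S (S (2 * S n))) with (2 * S (S n))%nat by lia. rewrite ilv_even.
      rewrite (tech5 d1 (S n)), (tech5 d2 n). lra.
Qed.

Lemma ilv_cv d1 d2 l1 l2 : Un_cv (sum_f_R0 d1) l1 -> Un_cv (sum_f_R0 d2) l2 ->
  Un_cv (sum_f_R0 (ilv d1 d2)) (l1 + l2).
Proof.
  intros H1 H2 eps He.
  destruct (H1 (eps/2)) as [N1 HN1]; [lra|].
  destruct (H2 (eps/2)) as [N2 HN2]; [lra|].
  exists (S (2 * (Nat.max N1 N2))). intros k Hk.
  destruct (Nat.Even_or_Odd k) as [[n Hn]|[n Hn]]; subst k.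
  - destruct n as [|n]; [lia|]. rewrite (proj2 (ilv_sum d1 d2 n)).
    specialize (HN1 (S n) ltac:(lia)). specialize (HN2 n ltac:(lia)).
    unfold Rdist in *. apply Rabs_def2 in HN1, HN2. destruct HN1, HN2. apply Rabs_def1; lra.
  - replace (2 * n + 1)%nat with (S (2*n)) by lia. rewrite (proj1 (ilv_sum d1 d2 n)).
    specialize (HN1 n ltac:(lia)). specialize (HN2 n ltac:(lia)).
    unfold Rdist in *. apply Rabs_def2 in HN1, HN2. destruct HN1, HN2. apply Rabs_def1; lra.
Qed.

Lemma Un_cv_ext u v l : (forall n, u n = v n) -> Un_cv u l -> Un_cv v l.
Proof. intros H Hu e He. destruct (Hu e He) as [N HN]. exists N. intros n Hn. rewrite <- H. auto. Qed.

Lemma ilv_cover (N T : R -> Prop) l1 l2 :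
  cover_costs (fun x => T x /\ ~ N x) (Fin l1) -> cover_costs N (Fin l2) ->
  cover_costs T (Fin (l1 + l2)).
Proof.
  intros (a1 & b1 & H1 & C1 & S1) (a2 & b2 & H2 & C2 & S2).
  exists (ilv a1 a2), (ilv b1 b2). split; [|split].
  - intro n. unfold ilv. destruct (Nat.even n); auto.
  - intros x Hx. destruct (classic (N x)) as [Hn|Hn].
    + destruct (C2 x Hn) as [n Hn']. exists (S (2*n)). rewrite !ilv_odd. auto.
    + destruct (C1 x (conj Hx Hn)) as [n Hn']. exists (2*n)%nat. rewrite !ilv_even. auto.
  - simpl in *. eapply Un_cv_ext; [|apply (ilv_cv _ _ _ _ S1 S2)].
    intro n. apply sum_eq. intros i _. unfold ilv. destruct (Nat.even i); auto.
Qed.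

Lemma exists_cost_near A w eps : lam_outer A = Fin w -> 0 < eps ->
  exists l, l <= w + eps /\ cover_costs A (Fin l).
Proof.
  intros Hw He. apply NNPP. intro Hn.
  assert (Hlb : forall c, cover_costs A c -> xle (Fin (w + eps)) c).
  { intros c Hc. destruct c; simpl; auto.
    - destruct (Rle_or_lt (w+eps) x); auto. exfalso. apply Hn. exists x. split; [lra|auto].
    - apply cost_nonneg in Hc. simpl in Hc. tauto. }
  pose proof (proj2 (lam_outer_glb A) _ Hlb). rewrite Hw in H. simpl in H. lra.
Qed.

Lemma null_key (N T : R -> Prop) :
  (forall eps, 0 < eps -> exists l, l <= eps /\ cover_costs N (Fin l)) ->
  xle (lam_outer T) (lam_outer (fun x => T x /\ ~ N x)).
Proof.
  intros HN.
  pose proof (lam_outer_nonneg (fun x => T x /\ ~ N x)) as Hv.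
  destruct (lam_outer (fun x => T x /\ ~ N x)) as [w| |] eqn:Ew; simpl in Hv; try tauto.
  2: destruct (lam_outer T); simpl; auto.
  assert (Hall : forall eps, 0 < eps -> xle (lam_outer T) (Fin (w + eps))).
  { intros eps He.
    destruct (exists_cost_near _ w (eps/2) Ew ltac:(lra)) as [l1 [Hl1 C1]].
    destruct (HN (eps/2) ltac:(lra)) as [l2 [Hl2 C2]].
    pose proof (proj1 (lam_outer_glb T) _ (ilv_cover N T l1 l2 C1 C2)).
    eapply xle_trans; [exact H|]. simpl. lra. }
  pose proof (lam_outer_nonneg T) as Hu.
  destruct (lam_outer T) as [r| |]; simpl in *; try tauto.
  - destruct (Rle_or_lt r w); auto. specialize (Hall ((r-w)/2) ltac:(lra)). lra.
  - apply (Hall 1). lra.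
Qed.

Lemma null_meas (N : R -> Prop) :
  (forall eps, 0 < eps -> exists l, l <= eps /\ cover_costs N (Fin l)) -> leb_measurable N.
Proof.
  intros HN T.
  assert (H0 : lam_outer (fun x => T x /\ N x) = Fin 0).
  { apply lam_outer_small. intros eps He. destruct (HN eps He) as [l [Hl (a & b & h1 & h2 & h3)]].
    exists l. split; auto. exists a, b. split; [auto|split; auto]. intros x [_ Hx]. auto. }
  rewrite H0.
  assert (Heq : lam_outer T = lam_outer (fun x => T x /\ ~ N x)).
  { apply xle_antisym. apply null_key; auto. apply lam_outer_mono. tauto. }
  rewrite Heq. pose proof (lam_outer_nonneg (fun x => T x /\ ~ N x)) as Hv.
  destruct (lam_outer (fun x => T x /\ ~ N x)); simpl in *; try tauto. f_equal; lra.
Qed.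

Definition xlt (a b : xR) := xle a b /\ a <> b.

Definition val (k : nat) : R :=
  let (i, k2) := of_nat k in let (j, n) := of_nat k2 in (INR i - INR j) / INR (S n).

Lemma Z_as_nat (z : Z) : exists i j : nat, IZR z = INR i - INR j.
Proof.
  destruct z as [|p|p].
  - exists 0%nat, 0%nat. simpl. lra.
  - exists (Pos.to_nat p), 0%nat. rewrite (INR_IZR_INZ (Pos.to_nat p)), positive_nat_Z. simpl. lra.
  - exists 0%nat, (Pos.to_nat p). rewrite (INR_IZR_INZ (Pos.to_nat p)), positive_nat_Z. simpl. rewrite <- Pos2Z.opp_pos, opp_IZR. lra.
Qed.

Lemma val_dense a b : a < b -> exists k, a < val k < b.
Proof.
  intros Hab.
  destruct (archimed (/ (b - a))) as [Hu _].
  set (n := Z.to_nat (up (/ (b - a)))).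
  assert (Hs : / (b - a) < INR (S n)).
  { rewrite S_INR. unfold n. destruct (Z_le_gt_dec 0 (up (/ (b-a)))) as [h|h].
    - rewrite INR_IZR_INZ, Z2Nat.id; auto. lra.
    - assert (IZR (up (/ (b - a))) <= 0) by (apply IZR_le; lia). pose proof (pos_INR (Z.to_nat (up (/ (b - a))))). lra. }
  set (s := INR (S n)) in *.
  assert (Hs0 : 0 < s) by (unfold s; apply lt_0_INR; lia).
  assert (Hsb : s * (b - a) > 1).
  { assert (0 < / (b-a)) by (apply Rinv_0_lt_compat; lra).
    replace 1 with (/ (b - a) * (b - a)) by (field; lra). apply Rmult_lt_compat_r; lra. }
  destruct (archimed (a * s)) as [Hz1 Hz2].
  destruct (Z_as_nat (up (a * s))) as [i [j Hij]].
  exists (to_nat (i, to_nat (j, n))). unfold val. rewrite !cancel_of_to. fold s.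
  rewrite <- Hij.
  assert (Hq : IZR (up (a * s)) / s * s = IZR (up (a * s))) by (field; lra).
  set (q := IZR (up (a * s)) / s) in *.
  split; nra.
Qed.

Lemma xlt_fin a b : xlt (Fin a) (Fin b) <-> a < b.
Proof.
  unfold xlt; simpl. split.
  - intros [h1 h2]. destruct h1; auto. subst. tauto.
  - intros h. split; [lra|]. intro e. injection e. lra.
Qed.

Lemma xR_dense p1 p2 : xlt p1 p2 -> exists k, xlt p1 (Fin (val k)) /\ xlt (Fin (val k)) p2.
Proof.
  intros H.
  assert (G : forall a b, a < b -> (forall r, a < r < b -> xlt p1 (Fin r) /\ xlt (Fin r) p2) ->
            exists k, xlt p1 (Fin (val k)) /\ xlt (Fin (val k)) p2).
  { intros a b hab hr. destruct (val_dense a b hab) as [k hk]. exists k. apply hr; auto. }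
  destruct p1 as [a| |], p2 as [b| |]; destruct H as [H1 H2]; simpl in H1; try tauto.
  - apply (G a b). destruct H1; [auto| subst; tauto]. intros r hr. rewrite !xlt_fin. lra.
  - apply (G a (a+1)). lra. intros r hr. rewrite xlt_fin. split; [lra|]. split; simpl; auto. discriminate.
  - apply (G (b-1) b). lra. intros r hr. rewrite xlt_fin. split; [|lra]. split; simpl; auto. discriminate.
  - apply (G 0 1). lra. intros r hr. split; split; simpl; auto; discriminate.
Qed.

Lemma geom_cv eps : Un_cv (sum_f_R0 (fun k => eps / 2 * (/ 2) ^ k)) eps.
Proof.
  pose proof (GP_infinite (/2) ltac:(rewrite Rabs_pos_eq; lra)) as H.
  unfold Pser, infinite_sum in H.
  assert (Hc : Un_cv (fun _ => eps / 2) (eps / 2)).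
  { intros e He. exists 0%nat. intros. unfold Rdist. rewrite Rminus_diag, Rabs_R0. auto. }
  pose proof (CV_mult _ _ _ _ Hc H) as H2.
  replace eps with (eps / 2 * / (1 - / 2)) by field.
  eapply Un_cv_ext; [|exact H2]. intro n. simpl. rewrite scal_sum. apply sum_eq. intros. lra.
Qed.

Theorem mainTheorem13 (E F : xR -> Prop) (m : xR -> xR) :
  xmeasurable E -> xmeasurable F ->
  (forall x, F x -> E (m x)) ->
  (forall y, E y -> exists x, F x /\ m x = y) ->
  measure_preserving F E m ->
  (forall x y, F x -> F y -> xle x y -> xle (m x) (m y)) ->
  exists F0 : xR -> Prop,
    (forall x, F0 x -> F x) /\ lam F0 = Fin 0 /\
    (forall y, E y -> exists x, (F x /\ ~ F0 x) /\ m x = y /\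
        (forall x', F x' -> ~ F0 x' -> m x' = y -> x' = x)).
Proof.
  intros _ _ HFE Hsurj Hmp Hmono.
  set (between := fun y r => exists p1 p2, F p1 /\ F p2 /\ m p1 = y /\ m p2 = y /\
                                           xlt p1 r /\ xlt r p2).
  assert (Huniq : forall y y' r, between y r -> between y' r -> y = y').
  { intros y y' r (p1 & p2 & F1 & F2 & E1 & E2 & L1 & L2) (q1 & q2 & G1 & G2 & D1 & D2 & K1 & K2).
    apply xle_antisym.
    - rewrite <- E1, <- D2. apply Hmono; auto. eapply xle_trans; [apply L1|apply K2].
    - rewrite <- D1, <- E2. apply Hmono; auto. eapply xle_trans; [apply K1|apply L2]. }
  set (A := fun y => exists x1 x2, F x1 /\ F x2 /\ m x1 = y /\ m x2 = y /\ x1 <> x2).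
  assert (HAb : forall y, A y -> exists k, between y (Fin (val k))).
  { intros y (x1 & x2 & F1 & F2 & E1 & E2 & N).
    destruct (xle_total x1 x2) as [h|h].
    - destruct (xR_dense x1 x2 (conj h N)) as [k [h1 h2]]. exists k, x1, x2. tauto.
    - destruct (xR_dense x2 x1 (conj h (fun e => N (eq_sym e)))) as [k [h1 h2]]. exists k, x2, x1. tauto. }
  assert (Hcov : forall eps, 0 < eps -> exists l, l <= eps /\ cover_costs (fin_part A) (Fin l)).
  { intros eps He. exists eps. split; [lra|].
    set (c := fun k => epsilon (inhabits 0) (fun w => between (Fin w) (Fin (val k)))).
    set (h := fun k => eps / 4 * (/ 2) ^ k).
    assert (Hh : forall k, 0 < h k) by (intro k; unfold h; apply Rmult_lt_0_compat; [lra|apply pow_lt; lra]).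
    exists (fun k => c k - h k), (fun k => c k + h k). split; [|split].
    - intro n. specialize (Hh n). lra.
    - intros w Hw. destruct (HAb _ Hw) as [k Hk]. exists k.
      assert (Hc : between (Fin (c k)) (Fin (val k))).
      { unfold c. apply epsilon_spec. eauto. }
      pose proof (Huniq _ _ _ Hc Hk) as e. injection e as e. specialize (Hh k). rewrite e. lra.
    - simpl. eapply Un_cv_ext; [|apply (geom_cv eps)]. intro n. apply sum_eq. intros i _.
      unfold h. lra. }
  assert (HAE : forall y, A y -> E y).
  { intros y (x1 & _ & F1 & _ & E1 & _). subst. auto. }
  destruct (Hmp A HAE (null_meas _ Hcov)) as [_ HlamA].
  assert (HA0 : lam A = Fin 0) by (apply lam_outer_small; auto).
  set (rep := fun y => epsilon (inhabits PInf) (fun x => F x /\ m x = y)).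
  exists (fun x => F x /\ A (m x) /\ x <> rep (m x)). split; [|split].
  - tauto.
  - apply xle_antisym.
    + rewrite <- HA0, <- HlamA. apply lam_outer_mono. unfold fin_part. tauto.
    + apply lam_outer_nonneg.
  - intros y Hy. assert (Hr : F (rep y) /\ m (rep y) = y) by (apply epsilon_spec; auto).
    exists (rep y). split; [|split].
    + split; [tauto|]. intros (_ & _ & N). apply N. rewrite (proj2 Hr). auto.
    + tauto.
    + intros x' Fx' Nx' Ex'. apply NNPP. intro Hne.
      apply Nx'. split; auto. rewrite Ex'. split; auto.
      exists x', (rep y). tauto.
Qed.
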